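(* Let $\alpha\in(0,1]$, $0\le a<b$, and let $f:[a,b]\to\mathbb{R}$ be $\alpha$-fractional differentiable with $D_\alpha f$ continuous and $m\le D_\alpha f(t)\le M$ for $t\in[a,b]$. Then $$ \left|\frac{f(b)+f(a)}{2}-\frac{\alpha}{b^\alpha-a^\alpha}\int_a^b f(s)\,d_\alpha s\right|\le\frac14\left(\frac{b^\alpha-a^\alpha}{\alpha}\right)(M-m). $$
   Context: The conformable $\alpha$-fractional derivative is $D_\alpha f(t):=\lim_{\varepsilon\to 0}\frac{f(t+\varepsilon t^{1-\alpha})-f(t)}{\varepsilon}$ for $t>0$, $D_\alpha f(0):=\lim_{t\to0^+}D_\alpha f(t)$. Integrals: $\int_a^b h(s)\,d_\alpha s:=\int_a^b h(s)s^{\alpha-1}\,ds$.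
   Formalization: f is also assumed continuous on [a,b]; for t>0 this follows from α-fractional differentiability, so it adds only continuity of f at 0 when a = 0. Apart from conventions, each condition added here is assumed in the paper as well or is needed for the statement above to hold. *)

(* Defs.v *)
From Stdlib Require Import Reals.
From Coquelicot Require Import Coquelicot.
Open Scope R_scope.

(* Real power x^y for y > 0 with the convention 0^y = 0
   (Stdlib's Rpower 0 y = 1, which is wrong for our purposes). *)
Definition rpow (x y : R) : R := if Rlt_dec 0 x then Rpower x y else 0.

(* The conformable alpha-derivative of f at t > 0 equals l:
   lim_{eps -> 0} (f (t + eps t^(1-alpha)) - f t) / eps = l,
   where the limit only uses points t + eps t^(1-alpha) in the domain [a,b]
   (one-sided at the endpoints). *)
Definition conf_lim (alpha a b : R) (f : R -> R) (t l : R) : Prop :=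
  filterlim (fun eps => (f (t + eps * rpow t (1 - alpha)) - f t) / eps)
    (within (fun eps => eps <> 0 /\ a <= t + eps * rpow t (1 - alpha) <= b)
       (locally 0))
    (locally l).

Definition is_conf_deriv_on (alpha a b : R) (f D : R -> R) : Prop :=
  (forall t, a <= t <= b -> 0 < t -> conf_lim alpha a b f t (D t)) /\
  (a = 0 -> filterlim D (at_right 0) (locally (D 0))).

Definition cont_on (a b : R) (g : R -> R) : Prop :=
  forall t, a <= t <= b ->
    filterlim g (within (fun s => a <= s <= b) (locally t)) (locally (g t)).

(* Main.v *)
Require Import Defs.
From Stdlib Require Import Reals Lra.
From Coquelicot Require Import Coquelicot.
Open Scope R_scope.

Lemma rpow_pos x y : 0 < x -> rpow x y = Rpower x y.
Proof. intro H; unfold rpow; destruct (Rlt_dec 0 x); [reflexivity|lra]. Qed.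
Lemma rpow_le0 x y : x <= 0 -> rpow x y = 0.
Proof. intro H; unfold rpow; destruct (Rlt_dec 0 x); [lra|reflexivity]. Qed.
Lemma rpow_ge0 x y : 0 <= rpow x y.
Proof. unfold rpow; destruct (Rlt_dec 0 x); [unfold Rpower; left; apply exp_pos|lra]. Qed.
Lemma rpow_gt0 x y : 0 < x -> 0 < rpow x y.
Proof. intro H; rewrite rpow_pos by lra; unfold Rpower; apply exp_pos. Qed.

Lemma rpow_lt al x y : 0 < al -> 0 <= x < y -> rpow x al < rpow y al.
Proof.
  intros Ha [H0 H1]. destruct (Req_dec x 0) as [->|Hx].
  - rewrite rpow_le0 by lra. apply rpow_gt0; lra.
  - rewrite !rpow_pos by lra. apply Rlt_Rpower_l; lra.
Qed.

Lemma rpow_le al x y : 0 < al -> 0 <= x <= y -> rpow x al <= rpow y al.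
Proof.
  intros Ha [H0 H1]. destruct (Req_dec x y) as [->|Hx]. lra.
  left; apply rpow_lt; lra.
Qed.

Lemma rpow_inv al u : 0 < al -> 0 <= u -> rpow (rpow u al) (/ al) = u.
Proof.
  intros Ha Hu. destruct (Req_dec u 0) as [->|Hx].
  - rewrite (rpow_le0 0) by lra. rewrite rpow_le0 by lra. reflexivity.
  - rewrite (rpow_pos u) by lra. rewrite rpow_pos by (unfold Rpower; apply exp_pos).
    rewrite Rpower_mult. replace (al * / al) with 1 by (field; lra).
    apply Rpower_1; lra.
Qed.

Lemma rpow_inv2 al u : 0 < al -> 0 <= u -> rpow (rpow u (/ al)) al = u.
Proof.
  intros Ha Hu. destruct (Req_dec u 0) as [->|Hx].
  - rewrite (rpow_le0 0) by lra. rewrite rpow_le0 by lra. reflexivity.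
  - rewrite (rpow_pos u) by lra. rewrite rpow_pos by (unfold Rpower; apply exp_pos).
    rewrite Rpower_mult. replace (/ al * al) with 1 by (field; lra).
    apply Rpower_1; lra.
Qed.

Lemma rpow_derive y e : 0 < y -> is_derive (fun t => rpow t e) y (e * rpow y (e - 1)).
Proof.
  intro Hy. rewrite (rpow_pos y) by lra.
  apply is_derive_ext_loc with (fun t => Rpower t e).
  - exists (mkposreal y Hy). intros t Ht. cbn in Ht. unfold ball in Ht; cbn in Ht.
    unfold AbsRing_ball, abs, minus, plus, opp in Ht; cbn in Ht.
    symmetry; apply rpow_pos. apply Rabs_def2 in Ht. lra.
  - apply is_derive_Reals. apply derivable_pt_lim_power; lra.
Qed.

Lemma rpow_cont0 al : 0 < al -> continuity_pt (fun t => rpow t al) 0.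
Proof.
  intro Ha. intros e He. exists (rpow e (/ al)). split.
  - apply rpow_gt0; lra.
  - intros x [_ Hx]. cbn in *. unfold R_dist in *. rewrite (rpow_le0 0) by lra.
    rewrite Rminus_0_r in *. destruct (Rle_dec x 0).
    + rewrite rpow_le0 by lra. rewrite Rabs_R0; lra.
    + rewrite Rabs_pos_eq by apply rpow_ge0. rewrite Rabs_pos_eq in Hx by lra.
      rewrite <- (rpow_inv2 al e) by lra. apply rpow_lt; lra.
Qed.

Lemma rpow_cont al t : 0 < al -> 0 <= t -> continuity_pt (fun t => rpow t al) t.
Proof.
  intros Ha Ht. destruct (Req_dec t 0) as [->|H]. apply rpow_cont0; auto.
  apply continuity_pt_filterlim. apply (ex_derive_continuous (fun t => rpow t al)).
  eexists; apply rpow_derive; lra.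
Qed.

Lemma ball_R (x e y : R) : ball x e y <-> Rabs (y - x) < e.
Proof. reflexivity. Qed.

Lemma conf_deriv alpha a b f l t :
  0 < alpha -> a < t < b -> 0 < t -> conf_lim alpha a b f t l ->
  is_derive f t (l * rpow t (alpha - 1)).
Proof.
  intros Ha Ht Ht0 Hc. set (c := rpow t (1 - alpha)).
  assert (Hc0 : 0 < c) by (apply rpow_gt0; lra).
  assert (Hcw : rpow t (alpha - 1) = / c).
  { unfold c; rewrite !rpow_pos by lra. apply Rmult_eq_reg_l with (Rpower t (1 - alpha)).
    rewrite <- Rpower_plus. replace (1 - alpha + (alpha - 1)) with 0 by ring.
    rewrite Rpower_O by lra. field. unfold Rpower; apply Rgt_not_eq, exp_pos.
    unfold Rpower; apply Rgt_not_eq, exp_pos. }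
  rewrite Hcw. apply is_derive_Reals. intros e He.
  apply filterlim_locally with (eps := mkposreal (e * c) ltac:(apply Rmult_lt_0_compat; lra)) in Hc.
  destruct Hc as [[d Hd] Hd2]. cbn in Hd2.
  assert (Hdd : 0 < Rmin (d * c) (Rmin (t - a) (b - t))).
  { repeat apply Rmin_pos; try lra. apply Rmult_lt_0_compat; lra. }
  exists (mkposreal _ Hdd). intros h Hh0 Hh. cbn in Hh.
  assert (Hh1 := Rmin_l (d*c) (Rmin (t - a) (b - t))).
  assert (Hh2 := Rmin_r (d*c) (Rmin (t - a) (b - t))).
  assert (Hh3 := Rmin_l (t - a) (b - t)).
  assert (Hh4 := Rmin_r (t - a) (b - t)).
  assert (Habs := Rabs_def2 _ _ Hh).
  specialize (Hd2 (h / c)). fold c in Hd2.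
  assert (E : t + h / c * c = t + h) by (field; lra). rewrite E in Hd2.
  assert (Hb : ball 0 d (h / c)).
  { apply ball_R. rewrite Rminus_0_r. unfold Rdiv. rewrite Rabs_mult, Rabs_inv.
    rewrite (Rabs_pos_eq c) by lra. apply Rmult_lt_reg_r with c; auto.
    rewrite Rmult_assoc, Rinv_l by lra. lra. }
  assert (Hs : h / c <> 0 /\ a <= t + h <= b).
  { split. unfold Rdiv; apply Rmult_integral_contrapositive; split; auto.
    apply Rinv_neq_0_compat; lra. lra. }
  specialize (Hd2 Hb Hs). apply ball_R in Hd2.
  replace ((f (t + h) - f t) / h - l * / c) with (((f (t + h) - f t) / (h / c) - l) / c)
    by (field; lra).
  unfold Rdiv at 1. rewrite Rabs_mult, Rabs_inv, (Rabs_pos_eq c) by lra.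
  apply Rmult_lt_reg_r with c; auto. rewrite Rmult_assoc, Rinv_l by lra. rewrite Rmult_1_r. exact Hd2.
Qed.

Definition clamp (lo hi x : R) := Rmax lo (Rmin hi x).

Lemma clamp_in lo hi x : lo <= hi -> lo <= clamp lo hi x <= hi.
Proof. intros; unfold clamp, Rmax, Rmin; repeat destruct Rle_dec; lra. Qed.
Lemma clamp_id lo hi x : lo <= x <= hi -> clamp lo hi x = x.
Proof. intros; unfold clamp, Rmax, Rmin; repeat destruct Rle_dec; lra. Qed.
Lemma clamp_lip lo hi x y : lo <= hi -> Rabs (clamp lo hi x - clamp lo hi y) <= Rabs (x - y).
Proof. intros; unfold clamp, Rmax, Rmin; repeat destruct Rle_dec; split_Rabs; lra. Qed.

Lemma clamp_cont a b f : a <= b -> cont_on a b f ->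
  forall z, continuity_pt (fun t => f (clamp a b t)) z.
Proof.
  intros Hab Hc z e He.
  assert (Hz := clamp_in a b z Hab).
  specialize (Hc _ Hz). apply filterlim_locally with (eps := mkposreal e He) in Hc.
  destruct Hc as [[d Hd] Hd2]. exists d; split; auto.
  intros x [_ Hx]. cbn in *. unfold R_dist in *.
  assert (Hl := clamp_lip a b x z Hab).
  apply (Hd2 (clamp a b x)). apply ball_R. lra. apply clamp_in; auto.
Qed.

Definition phi al t := rpow t al / al.

Lemma phi_derive al t : 0 < al -> 0 < t -> is_derive (phi al) t (rpow t (al - 1)).
Proof.
  intros Ha Ht. unfold phi.
  replace (rpow t (al - 1)) with ((al * rpow t (al - 1)) / al) by (field; lra).
  apply (is_derive_scal_l (fun t => rpow t al) t (al * rpow t (al - 1)) (/ al) ltac:(apply rpow_derive; lra)).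
Qed.

Lemma mvt_step alpha a b f D c x y :
  0 < alpha -> 0 <= a < b -> is_conf_deriv_on alpha a b f D -> cont_on a b f ->
  a <= x <= y -> y <= b ->
  exists xi, x <= xi <= y /\
    (f y - c * phi alpha y) - (f x - c * phi alpha x) = (D xi - c) * rpow xi (alpha - 1) * (y - x).
Proof.
  intros Ha Hab [Hd _] Hc Hx Hy.
  destruct (MVT_gen (fun t => f (clamp a b t) - c * (rpow t alpha / alpha)) x y
     (fun t => (D t - c) * rpow t (alpha - 1))) as [xi [Hxi Heq]].
  - intros z Hz. rewrite Rmin_left in Hz by lra. rewrite Rmax_right in Hz by lra.
    replace ((D z - c) * rpow z (alpha - 1)) with (D z * rpow z (alpha - 1) - c * rpow z (alpha - 1)) by ring.
    apply (is_derive_minus (fun t => f (clamp a b t)) (fun t => c * (rpow t alpha / alpha))).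
    + apply is_derive_ext_loc with f.
      * assert (Hp : 0 < Rmin (z - a) (b - z)) by (apply Rmin_pos; lra).
        exists (mkposreal _ Hp). intros t Ht. apply ball_R in Ht. change (Rabs (t - z) < Rmin (z - a) (b - z)) in Ht.
        assert (H1 := Rmin_l (z - a) (b - z)). assert (H2 := Rmin_r (z - a) (b - z)).
        apply Rabs_def2 in Ht. rewrite clamp_id. reflexivity. lra.
      * apply (conf_deriv alpha a b); try lra. apply Hd; lra.
    + apply (is_derive_scal (fun t => rpow t alpha / alpha)). apply (phi_derive alpha z); lra.
  - intros z Hz. rewrite Rmin_left in Hz by lra. rewrite Rmax_right in Hz by lra.
    apply continuity_pt_minus. apply (clamp_cont a b f); [lra|auto].
    apply continuity_pt_scal. apply continuity_pt_mult. apply rpow_cont; lra.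
    apply continuity_pt_const. intros u v; reflexivity.
  - rewrite Rmin_left in Hxi by lra. rewrite Rmax_right in Hxi by lra.
    exists xi. split; auto. rewrite !clamp_id in Heq by lra. unfold phi. lra.
Qed.

Lemma mono alpha a b f D m M x y :
  0 < alpha -> 0 <= a < b -> is_conf_deriv_on alpha a b f D -> cont_on a b f ->
  (forall t, a <= t <= b -> m <= D t <= M) ->
  a <= x <= y -> y <= b ->
  m * (phi alpha y - phi alpha x) <= f y - f x <= M * (phi alpha y - phi alpha x).
Proof.
  intros Ha Hab Hd Hc HB Hx Hy. split.
  - destruct (mvt_step alpha a b f D m x y) as [xi [Hxi E]]; auto.
    assert (0 <= (D xi - m) * rpow xi (alpha - 1) * (y - x)).
    { apply Rmult_le_pos. apply Rmult_le_pos. assert (H:=HB xi ltac:(lra)). lra.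
      apply rpow_ge0. lra. }
    lra.
  - destruct (mvt_step alpha a b f D M x y) as [xi [Hxi E]]; auto.
    assert (0 <= (M - D xi) * rpow xi (alpha - 1) * (y - x)).
    { apply Rmult_le_pos. apply Rmult_le_pos. assert (H:=HB xi ltac:(lra)). lra.
      apply rpow_ge0. lra. }
    assert ((D xi - M) * rpow xi (alpha - 1) * (y - x) = - ((M - D xi) * rpow xi (alpha - 1) * (y - x))) by ring.
    lra.
Qed.

Definition psi al u := rpow (al * u) (/ al).

Lemma phi_psi al u : 0 < al -> 0 <= u -> phi al (psi al u) = u.
Proof. intros. unfold phi, psi. rewrite rpow_inv2 by (try apply Rmult_le_pos; lra). field; lra. Qed.

Lemma psi_phi al t : 0 < al -> 0 <= t -> psi al (phi al t) = t.
Proof. intros. unfold phi, psi. replace (al * (rpow t al / al)) with (rpow t al) by (field; lra).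
  apply rpow_inv; lra. Qed.

Lemma phi_lt al x y : 0 < al -> 0 <= x < y -> phi al x < phi al y.
Proof. intros. unfold phi, Rdiv. apply Rmult_lt_compat_r. apply Rinv_0_lt_compat; lra. apply rpow_lt; lra. Qed.

Lemma phi_nonneg al x : 0 < al -> 0 <= phi al x.
Proof. intros. unfold phi, Rdiv. apply Rmult_le_pos. apply rpow_ge0. left; apply Rinv_0_lt_compat; lra. Qed.

Lemma psi_nonneg al u : 0 <= psi al u.
Proof. apply rpow_ge0. Qed.

Lemma psi_ord al a b u v : 0 < al -> 0 <= a <= b ->
  phi al a <= u -> u <= v -> v <= phi al b ->
  a <= psi al u /\ psi al u <= psi al v /\ psi al v <= b.
Proof.
  intros Ha Ha0 H1 H2 H3.
  assert (Hu : 0 <= u) by (pose proof (phi_nonneg al a Ha); lra).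
  assert (P1 := phi_psi al u Ha Hu). assert (P2 := phi_psi al v Ha ltac:(lra)).
  assert (N1 := psi_nonneg al u). assert (N2 := psi_nonneg al v).
  split; [|split].
  - destruct (Rle_dec a (psi al u)) as [h|h]; auto.
    assert (phi al (psi al u) < phi al a) by (apply phi_lt; lra). lra.
  - destruct (Rle_dec (psi al u) (psi al v)) as [h|h]; auto.
    assert (phi al (psi al v) < phi al (psi al u)) by (apply phi_lt; lra). lra.
  - destruct (Rle_dec (psi al v) b) as [h|h]; auto.
    assert (phi al b < phi al (psi al v)) by (apply phi_lt; lra). lra.
Qed.

Lemma gbound alpha a b f D m M u v :
  0 < alpha -> 0 <= a < b -> is_conf_deriv_on alpha a b f D -> cont_on a b f ->
  (forall t, a <= t <= b -> m <= D t <= M) ->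
  phi alpha a <= u -> u <= v -> v <= phi alpha b ->
  m * (v - u) <= f (psi alpha v) - f (psi alpha u) <= M * (v - u).
Proof.
  intros Ha Hab Hd Hc HB H1 H2 H3.
  destruct (psi_ord alpha a b u v Ha ltac:(lra) H1 H2 H3) as [Q1 [Q2 Q3]].
  assert (Hu : 0 <= u) by (pose proof (phi_nonneg alpha a Ha); lra).
  assert (K := mono alpha a b f D m M (psi alpha u) (psi alpha v) Ha Hab Hd Hc HB ltac:(lra) Q3).
  rewrite !phi_psi in K by lra. exact K.
Qed.

Lemma absb m M d X : 0 <= d -> m * d <= X <= M * d -> Rabs X <= (Rabs m + Rabs M) * d.
Proof.
  intros Hd [H1 H2]. idtac.
  split_Rabs; nra.
Qed.

Lemma glip alpha a b f D m M u v :
  0 < alpha -> 0 <= a < b -> is_conf_deriv_on alpha a b f D -> cont_on a b f ->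
  (forall t, a <= t <= b -> m <= D t <= M) ->
  let g := fun u => f (psi alpha (clamp (phi alpha a) (phi alpha b) u)) in
  Rabs (g v - g u) <= (Rabs m + Rabs M) * Rabs (v - u).
Proof.
  intros Ha Hab Hd Hc HB g. unfold g.
  assert (HAB : phi alpha a <= phi alpha b) by (left; apply phi_lt; lra).
  assert (L := clamp_lip _ _ v u HAB).
  assert (Iu := clamp_in _ _ u HAB). assert (Iv := clamp_in _ _ v HAB).
  set (u' := clamp (phi alpha a) (phi alpha b) u) in *.
  set (v' := clamp (phi alpha a) (phi alpha b) v) in *.
  apply Rle_trans with ((Rabs m + Rabs M) * Rabs (v' - u')).
  2: { apply Rmult_le_compat_l; auto. pose proof (Rabs_pos m); pose proof (Rabs_pos M); lra. }
  destruct (Rle_dec u' v') as [h|h].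
  - destruct (gbound alpha a b f D m M u' v') as [G1 G2]; try lra; auto.
    rewrite (Rabs_pos_eq (v' - u')) by lra. apply absb; lra.
  - destruct (gbound alpha a b f D m M v' u') as [G1 G2]; try lra; auto.
    rewrite Rabs_minus_sym. rewrite (Rabs_minus_sym v').
    rewrite (Rabs_pos_eq (u' - v')) by lra. apply absb; lra.
Qed.

Lemma lip_cont (g : R -> R) L : 0 <= L -> (forall u v, Rabs (g v - g u) <= L * Rabs (v - u)) ->
  forall z, continuous g z.
Proof.
  intros HL Hg z. apply continuity_pt_filterlim. intros e He.
  exists (e / (L + 1)). split. apply Rdiv_lt_0_compat; lra.
  intros x [_ Hx]. cbn in *. unfold R_dist in *.
  eapply Rle_lt_trans. apply Hg.
  apply Rle_lt_trans with ((L + 1) * Rabs (x - z)).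
  apply Rmult_le_compat_r. apply Rabs_pos. lra.
  apply Rmult_lt_reg_l with (/ (L + 1)). apply Rinv_0_lt_compat; lra.
  rewrite <- Rmult_assoc, Rinv_l by lra. rewrite Rmult_1_l.
  replace (/ (L + 1) * e) with (e / (L + 1)) by (unfold Rdiv; ring). exact Hx.
Qed.

Theorem mainTheorem19 :
  forall (alpha a b : R) (f D : R -> R) (m M : R),
    0 < alpha <= 1 ->
    0 <= a < b ->
    is_conf_deriv_on alpha a b f D ->
    cont_on a b D ->
    cont_on a b f ->
    (forall t, a <= t <= b -> m <= D t <= M) ->
    exists I : R,
      is_RInt_gen (fun s => f s * rpow s (alpha - 1)) (at_right a) (at_point b) I /\
      Rabs ((f b + f a) / 2 - alpha / (rpow b alpha - rpow a alpha) * I)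
        <= / 4 * ((rpow b alpha - rpow a alpha) / alpha) * (M - m).
Proof.
  intros alpha a b f D m M [Ha Ha1] Hab Hd _ Hc HB.
  set (A := phi alpha a). set (B := phi alpha b).
  assert (HAB : A < B) by (apply phi_lt; lra).
  assert (HA0 : 0 <= A) by apply phi_nonneg, Ha.
  set (g := fun u => f (psi alpha (clamp A B u))).
  assert (Hgl := fun u v => glip alpha a b f D m M u v Ha Hab Hd Hc HB).
  cbv zeta in Hgl. fold A B g in Hgl.
  assert (Hgc : forall z, continuous g z).
  { apply (lip_cont g (Rabs m + Rabs M)). pose proof (Rabs_pos m); pose proof (Rabs_pos M); lra. auto. }
  assert (Hex : ex_RInt g A B) by (apply (@ex_RInt_continuous R_CompleteNormedModule); intros; apply Hgc).
  set (I := RInt g A B).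
  assert (gA : g A = f a).
  { unfold g. rewrite clamp_id by lra. unfold A. rewrite psi_phi; lra. }
  assert (gB : g B = f b).
  { unfold g. rewrite clamp_id by lra. unfold B. rewrite psi_phi; lra. }
  assert (Hm : m <= M) by (destruct (HB a) as [h1 h2]; lra).
  assert (HexB : forall u v, ex_RInt g u v) by (intros; apply (@ex_RInt_continuous R_CompleteNormedModule); intros; apply Hgc).
  exists I. split.
  - apply (filterlimi_lim_ext_loc (fun ab => RInt g (phi alpha (fst ab)) B)).
    + apply (Filter_prod _ _ _ (fun x => a < x < b) (fun y => y = b)).
      * assert (Hp : 0 < b - a) by lra. exists (mkposreal _ Hp). intros y Hy Hay.
        apply ball_R in Hy. change (Rabs (y - a) < b - a) in Hy. apply Rabs_def2 in Hy. lra.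
      * reflexivity.
      * intros x y Hx ->. cbn [fst snd].
        apply is_RInt_ext with (fun s => scal (rpow s (alpha-1)) (g (phi alpha s))).
        { intros s Hs. rewrite Rmin_left in Hs by lra. rewrite Rmax_right in Hs by lra.
          unfold g. rewrite clamp_id. rewrite psi_phi by lra. unfold scal; simpl; unfold mult; simpl. ring.
          split; left; apply phi_lt; lra. }
        unfold B. apply (is_RInt_comp g (phi alpha) (fun s => rpow s (alpha-1)) x b).
        { intros; apply Hgc. }
        { intros s Hs. rewrite Rmin_left in Hs by lra. rewrite Rmax_right in Hs by lra.
          split. apply phi_derive; lra. apply (@ex_derive_continuous R_AbsRing R_NormedModule (fun s => rpow s (alpha-1))); eexists; apply rpow_derive; lra. }
    + apply (filterlim_comp _ _ _ fst (fun x => RInt g (phi alpha x) B) _ (at_right a)).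
      apply filterlim_fst.
      apply (filterlim_comp _ _ _ (phi alpha) (fun u => RInt g u B) _ (locally A)).
      * eapply filterlim_filter_le_1. apply filter_le_within.
        apply continuity_pt_filterlim. unfold phi. apply continuity_pt_mult. apply rpow_cont; lra.
        apply continuity_pt_const; intros u v; reflexivity.
      * assert (K : continuous (fun u => opp (RInt g B u)) A).
        { apply (@continuous_opp R_UniformSpace R_AbsRing R_NormedModule (fun u => RInt g B u)). apply (continuous_RInt_1 g B A (fun z => RInt g B z)).
          apply filter_forall; intros; apply (@RInt_correct R_CompleteNormedModule); apply HexB. }
        unfold continuous in K. rewrite opp_RInt_swap in K by apply HexB.
        eapply filterlim_ext. 2: exact K. intros u. simpl. apply opp_RInt_swap, HexB.
  - set (P := (f a + f b) / 2). set (c := (m + M) / 2). set (Q := (A + B) / 2).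
    assert (Hi : is_RInt (fun u => (P - c * Q) + c * u - g u) A B (P * (B - A) - I)).
    { assert (H1 : is_RInt (fun u => (P - c * Q) + c * u) A B
          ((fun u => (P - c * Q) * u + c * (u * u) / 2) B - (fun u => (P - c * Q) * u + c * (u * u) / 2) A)).
      { apply (is_RInt_derive (fun u => (P - c * Q) * u + c * (u * u) / 2)).
        intros x _. auto_derive; [auto|field].
        intros x _. apply continuity_pt_filterlim.
        apply continuity_pt_plus. apply continuity_pt_const; intros u v; reflexivity.
        apply continuity_pt_mult. apply continuity_pt_const; intros u v; reflexivity.
        apply continuity_pt_id. }
      assert (H2 := is_RInt_minus _ _ _ _ _ _ H1 (RInt_correct _ _ _ Hex)).
      replace (P * (B - A) - I) with
        (minus ((fun u => (P - c * Q) * u + c * (u * u) / 2) B - (fun u => (P - c * Q) * u + c * (u * u) / 2) A) I).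
      exact H2.
      unfold minus, plus, opp; simpl. unfold Q. field. }
    assert (psiA : psi alpha A = a) by (unfold A; apply psi_phi; lra).
    assert (psiB : psi alpha B = b) by (unfold B; apply psi_phi; lra).
    assert (Hpt : forall u, A <= u <= B -> Rabs ((P - c * Q) + c * u - g u) <= (M - m) * (B - A) / 4).
    { intros u Hu. assert (gu : g u = f (psi alpha u)) by (unfold g; rewrite clamp_id; lra).
      destruct (gbound alpha a b f D m M A u Ha Hab Hd Hc HB (Rle_refl A) (proj1 Hu) (proj2 Hu)) as [G1 G2].
      destruct (gbound alpha a b f D m M u B Ha Hab Hd Hc HB (proj1 Hu) (proj2 Hu) (Rle_refl B)) as [G3 G4].
      rewrite psiA in G1, G2. rewrite psiB in G3, G4. rewrite gu.
      apply Rabs_le. unfold P, c, Q. split; nra. }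
    assert (Hb := abs_RInt_le_const _ A B _ ltac:(lra) (ex_intro _ _ Hi) Hpt).
    rewrite (is_RInt_unique _ _ _ _ Hi) in Hb.
    assert (HS0 : 0 < B - A) by lra.
    set (S := B - A) in *.
    assert (HS : rpow b alpha - rpow a alpha = alpha * S) by (unfold S, A, B, phi; field; lra).
    rewrite HS.
    replace ((f b + f a) / 2 - alpha / (alpha * S) * I) with ((P * S - I) / S)
      by (unfold P; field; split; [apply Rgt_not_eq, HS0|lra]).
    unfold Rdiv at 1. rewrite Rabs_mult, Rabs_inv, (Rabs_pos_eq S) by lra.
    apply Rmult_le_reg_r with S. lra.
    rewrite Rmult_assoc, Rinv_l, Rmult_1_r by lra.
    replace (/ 4 * (alpha * S / alpha) * (M - m) * S) with (S * ((M - m) * S / 4)) by (field; lra).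
    exact Hb.
Qed.
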